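(* Every free quandle is right orderable and semi-latin.
   Context: A quandle is a non-empty set $Q$ with a binary operation $*$ such that $x*x=x$ for all $x$; for all $x,y$ there is a unique $z$ with $x=z*y$; and $(x*y)*z=(x*z)*(y*z)$ for all $x,y,z$. The free quandle on a set $S$ is the quandle $FQ(S)$ with a map $S\to FQ(S)$ satisfying the usual universal property among quandles (equivalently: the set of symbols $a^w$, $a\in S$, $w$ in the free group $F(S)$, with $a^w*b^u=a^{wu^{-1}bu}$, modulo the equivalence relation generated by $a^w=a^{aw}$). A quandle $Q$ is right orderable if there is a linear order $<$ on $Q$ such that $x<y$ implies $x*z<y*z$ for all $x,y,z\in Q$. A quandle $Q$ is semi-latin if for each $x\in Q$ the map $L_x:Q\to Q$, $L_x(y)=x*y$, is injective. *)

(* Defs.v *)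
Record quandle := Quandle {
  qcar :> Type;
  qop : qcar -> qcar -> qcar;
  q_nonempty : inhabited qcar;
  q_idem : forall x, qop x x = x;
  q_rdiv : forall x y, exists! z, x = qop z y;
  q_rdist : forall x y z, qop (qop x y) z = qop (qop x z) (qop y z)
}.

Definition quandle_hom (Q1 Q2 : quandle) (f : Q1 -> Q2) : Prop :=
  forall x y, f (qop Q1 x y) = qop Q2 (f x) (f y).

Definition is_free_quandle (S : Type) (Q : quandle) (i : S -> Q) : Prop :=
  forall (Q' : quandle) (f : S -> Q'),
    exists g : Q -> Q',
      quandle_hom Q Q' g /\ (forall s, g (i s) = f s) /\
      (forall g' : Q -> Q', quandle_hom Q Q' g' -> (forall s, g' (i s) = f s) ->
         forall x, g' x = g x).

Definition strict_linear_order (T : Type) (lt : T -> T -> Prop) : Prop :=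
  (forall x, ~ lt x x) /\
  (forall x y z, lt x y -> lt y z -> lt x z) /\
  (forall x y, lt x y \/ x = y \/ lt y x).

Definition right_orderable (Q : quandle) : Prop :=
  exists lt : Q -> Q -> Prop, strict_linear_order Q lt /\
    forall x y z, lt x y -> lt (qop Q x z) (qop Q y z).

Definition semi_latin (Q : quandle) : Prop :=
  forall x y1 y2 : Q, qop Q x y1 = qop Q x y2 -> y1 = y2.

(* Main.v *)
Require Import Defs.
From Stdlib Require Import List ZArith Lia Classical ClassicalEpsilon FunctionalExtensionality ProofIrrelevance.
From mathcomp Require ssreflect ssrbool eqtype boolp wochoice.
Module WO.
Import ssreflect ssrbool eqtype boolp wochoice.
Lemma wo_exists (T : Type) : exists R : T -> T -> Prop,
  (forall x y, R x y \/ R y x) /\ (forall x y, R x y -> R y x -> x = y) /\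
  (forall x y z, R x y -> R y z -> R x z) /\
  (forall P : T -> Prop, (exists x, P x) -> exists m, P m /\ forall x, P x -> R m x).
Proof.
  case: (well_ordering_principle {classic T}) => R HR.
  have memP : forall (P : T -> Prop) (x : {classic T}), (x \in [pred y : {classic T} | `[< P y >]]) <-> P x.
    by move=> P x; rewrite inE; split => /asboolP.
  have minP : forall P : T -> Prop, (exists x, P x) -> exists m, P m /\ forall x, P x -> R m x.
    move=> P [x Px].
    have ne : nonempty [pred y : {classic T} | `[< P y >]] by exists x; apply/memP.
    case: (HR _ ne) => m [[Pm lb] _].
    exists m; split; first by apply/memP.
    move=> y Py; apply: lb; exact/memP.
  have refl : forall x, R x x.
    move=> x; case: (minP (fun z => z = x)); first by exists x.
    by move=> m [-> H]; apply: H.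
  have tot : forall x y, R x y \/ R y x.
    move=> x y; case: (minP (fun z => z = x \/ z = y)); first by exists x; left.
    by move=> m [[->|->] H]; [left|right]; apply: H; auto.
  have anti : forall x y, R x y -> R y x -> x = y.
    move=> x y Rxy Ryx.
    have ne : nonempty [pred z : {classic T} | `[< z = x \/ z = y >]] by exists x; apply/memP; left.
    case: (HR _ ne) => m [_ U].
    have Ux : m = x. apply: U; split; first by apply/memP; left.
      by move=> z /memP [->|->].
    have Uy : m = y. apply: U; split; first by apply/memP; right.
      by move=> z /memP [->|->].
    by rewrite -Ux -Uy.
  exists (fun x y => R x y = true); split => //; split => //; split => //.
  move=> x y z Rxy Ryz.
  case: (minP (fun w => w = x \/ w = y \/ w = z)); first by exists x; left.
  move=> m [Hm H].
  case: Hm => [Ex|[Ey|Ez]]; subst m.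
  - by apply: H; auto.
  - have Ryx := H x ltac:(auto). by rewrite (anti x y Rxy Ryx).
  - have Rzy := H y ltac:(auto). by rewrite -(anti y z Ryz Rzy).
Qed.
End WO.
Import ListNotations.
Open Scope Z_scope.

Definition series (S : Type) := list S -> Z.

Definition one {S} : series S := fun t => match t with [] => 1 | _ => 0 end.
Definition zero {S} : series S := fun _ => 0.
Definition dl {S} (x : S) (p : series S) : series S := fun u => p (x :: u).
Definition sadd {S} (p q : series S) : series S := fun t => p t + q t.
Definition ssub {S} (p q : series S) : series S := fun t => p t - q t.
Definition sscale {S} (c : Z) (p : series S) : series S := fun t => c * p t.

Fixpoint mul {S} (p q : series S) (t : list S) {struct t} : Z :=
  match t with
  | [] => p [] * q []
  | x :: t' => p [] * q (x :: t') + mul (dl x p) q t'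
  end.

Lemma mul_nil {S} (p q : series S) : mul p q [] = p [] * q [].
Proof. reflexivity. Qed.
Lemma mul_cons {S} (p q : series S) x t : mul p q (x :: t) = p [] * q (x :: t) + mul (dl x p) q t.
Proof. reflexivity. Qed.

Lemma mul_lin_l {S} (a b : Z) (p p' q : series S) t :
  mul (fun u => a * p u + b * p' u) q t = a * mul p q t + b * mul p' q t.
Proof.
  revert p p'; induction t as [|x t IH]; intros p p'; cbn [mul one dl zero].
  - ring.
  - specialize (IH (dl x p) (dl x p')). unfold dl in *. rewrite IH. ring.
Qed.

Lemma mul_lin_r {S} (a b : Z) (p q q' : series S) t :
  mul p (fun u => a * q u + b * q' u) t = a * mul p q t + b * mul p q' t.
Proof.
  revert p; induction t as [|x t IH]; intros p; cbn [mul one dl zero].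
  - ring.
  - rewrite IH. ring.
Qed.

Lemma mul_zero_l {S} (q : series S) t : mul zero q t = 0.
Proof.
  induction t as [|x t IH]; simpl; auto.
Qed.

Lemma mul_ext_l {S} (p p' q : series S) t : (forall u, p u = p' u) -> mul p q t = mul p' q t.
Proof. intros H. replace p' with p; auto. apply functional_extensionality; auto. Qed.

Lemma mul_zero_l' {S} (p q : series S) t : (forall u, p u = 0) -> mul p q t = 0.
Proof. intros H. rewrite (mul_ext_l p zero q t H). apply mul_zero_l. Qed.

Lemma mul_one_l {S} (q : series S) : mul one q = q.
Proof.
  apply functional_extensionality; intro t; destruct t as [|x t]; cbn [mul one dl zero].
  - ring.
  - rewrite (mul_zero_l' (dl x one)); [ring|intros u; reflexivity].
Qed.

Lemma mul_one_r {S} (p : series S) : mul p one = p.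
Proof.
  apply functional_extensionality; intro t; revert p; induction t as [|x t IH]; intros p; cbn [mul one dl zero].
  - ring.
  - rewrite IH. unfold dl. ring.
Qed.

Lemma mul_assoc {S} (p q r : series S) : mul (mul p q) r = mul p (mul q r).
Proof.
  apply functional_extensionality; intro t; revert p; induction t as [|x t IH]; intros p.
  - rewrite !mul_nil. ring.
  - assert (E : dl x (mul p q) = fun u => p [] * dl x q u + 1 * mul (dl x p) q u).
    { apply functional_extensionality; intro u. unfold dl at 1. rewrite mul_cons. unfold dl. ring. }
    rewrite !mul_cons, E, mul_lin_l, IH, mul_nil. ring.
Qed.

Lemma mul_sub_l {S} (p p' q : series S) : mul (ssub p p') q = ssub (mul p q) (mul p' q).
Proof.
  apply functional_extensionality; intro t. unfold ssub.
  rewrite (mul_ext_l _ (fun u => 1 * p u + (-1) * p' u)) by (intros; ring).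
  rewrite mul_lin_l. ring.
Qed.

Lemma mul_sub_r {S} (p q q' : series S) : mul p (ssub q q') = ssub (mul p q) (mul p q').
Proof.
  apply functional_extensionality; intro t. unfold ssub.
  replace (fun t0 => q t0 - q' t0) with (fun u => 1 * q u + (-1) * q' u)
    by (apply functional_extensionality; intros; ring).
  rewrite mul_lin_r. ring.
Qed.

Lemma mul_nz_split {S} (p q : series S) t :
  mul p q t <> 0 -> exists u v, t = u ++ v /\ p u <> 0 /\ q v <> 0.
Proof.
  revert p; induction t as [|x t IH]; intros p H.
  - rewrite mul_nil in H. exists [], []. split; [reflexivity|]. split; intro E; apply H; rewrite E; ring.
  - rewrite mul_cons in H.
    destruct (Z.eq_dec (p [] * q (x :: t)) 0) as [E|E].
    + rewrite E in H. destruct (IH (dl x p)) as [u [v [Ht [Hu Hv]]]]; [lia|].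
      exists (x :: u), v. rewrite Ht. split; [reflexivity|]. split; assumption.
    + exists [], (x :: t). split; [reflexivity|]. split; intro E'; apply E; rewrite E'; ring.
Qed.

Lemma low_l {S} (p q : series S) t :
  (forall s, (length s < length t)%nat -> p s = 0) -> mul p q t = p t * q [].
Proof.
  revert p; induction t as [|x t IH]; intros p H.
  - reflexivity.
  - rewrite mul_cons, IH.
    + rewrite (H []) by (simpl; lia). unfold dl. ring.
    + intros s Hs. unfold dl. apply H. simpl. lia.
Qed.

Lemma low_r {S} (p q : series S) t :
  (forall s, (length s < length t)%nat -> q s = 0) -> mul p q t = p [] * q t.
Proof.
  revert p; induction t as [|x t IH]; intros p H.
  - reflexivity.
  - rewrite mul_cons, IH.
    + rewrite (H t) by (simpl; lia). ring.
    + intros s Hs. apply H. simpl. lia.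
Qed.

Lemma mul_single {S} (p q : series S) c : mul p q [c] = p [] * q [c] + p [c] * q [].
Proof. rewrite mul_cons, mul_nil. reflexivity. Qed.

Definition eqd {S : Type} (a b : S) : {a = b} + {a <> b} := excluded_middle_informative (a = b).

Definition xg {S} (a : S) : series S := fun t =>
  match t with [] => 1 | [b] => if eqd b a then 1 else 0 | _ => 0 end.
Fixpoint yg {S} (a : S) (t : list S) : Z :=
  match t with [] => 1 | b :: t' => if eqd b a then - yg a t' else 0 end.

Lemma mul_xg_cons {S} (a : S) q x t :
  mul (xg a) q (x :: t) = q (x :: t) + (if eqd x a then q t else 0).
Proof.
  rewrite mul_cons. destruct (eqd x a) as [E|E].
  - rewrite (mul_ext_l _ one). rewrite mul_one_l. change (xg a []) with 1. ring.
    intros u; destruct u; unfold dl, xg, one; simpl; destruct (eqd x a); try congruence; reflexivity.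
  - rewrite mul_zero_l'. change (xg a []) with 1. ring.
    intros u; destruct u; unfold dl, xg; simpl; destruct (eqd x a); try congruence; reflexivity.
Qed.

Lemma xg_yg {S} (a : S) : mul (xg a) (yg a) = one.
Proof.
  apply functional_extensionality; intros [|x t].
  - reflexivity.
  - rewrite mul_xg_cons. simpl. destruct (eqd x a); ring.
Qed.

Lemma yg_xg {S} (a : S) : mul (yg a) (xg a) = one.
Proof.
  apply functional_extensionality; intros t; induction t as [|x t IH].
  - reflexivity.
  - rewrite mul_cons. destruct (eqd x a) as [E|E].
    + rewrite (mul_ext_l _ (fun u => (-1) * yg a u + 0 * yg a u)).
      * rewrite mul_lin_l, IH. cbn -[Z.mul Z.add Z.opp Z.sub]. destruct (eqd x a); [|congruence].
        destruct t; cbn -[Z.mul Z.add Z.opp Z.sub]; try destruct (eqd x a); ring.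
      * intros u. unfold dl. cbn [yg]. destruct (eqd x a); [ring|congruence].
    + rewrite mul_zero_l'.
      * cbn -[Z.mul Z.add Z.opp Z.sub]. destruct t; destruct (eqd x a); try congruence; ring.
      * intros u. unfold dl. cbn [yg]. destruct (eqd x a); [congruence|reflexivity].
Qed.

Definition zit {X} (f g : X -> X) (n : Z) (x : X) : X :=
  match n with
  | Z0 => x
  | Zpos p => Nat.iter (Pos.to_nat p) f x
  | Zneg p => Nat.iter (Pos.to_nat p) g x
  end.

Lemma zit_nat {X} (f g : X -> X) k x : zit f g (Z.of_nat k) x = Nat.iter k f x.
Proof. destruct k; [reflexivity|]. simpl. rewrite SuccNat2Pos.id_succ. reflexivity. Qed.
Lemma zit_negnat {X} (f g : X -> X) k x : zit f g (- Z.of_nat k) x = Nat.iter k g x.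
Proof. destruct k; [reflexivity|]. simpl. rewrite SuccNat2Pos.id_succ. reflexivity. Qed.

Lemma Z_nat_cases (n : Z) : (exists k, n = Z.of_nat k) \/ (exists k, n = - Z.of_nat (S k)).
Proof.
  destruct (Z_le_gt_dec 0 n).
  - left. exists (Z.to_nat n). lia.
  - right. exists (Z.to_nat (- n - 1)). lia.
Qed.

Lemma zit_succ {X} (f g : X -> X) (fg : forall x, f (g x) = x) n x :
  zit f g (Z.succ n) x = f (zit f g n x).
Proof.
  destruct (Z_nat_cases n) as [[k ->]|[k ->]].
  - replace (Z.succ (Z.of_nat k)) with (Z.of_nat (S k)) by lia.
    rewrite !zit_nat. reflexivity.
  - replace (Z.succ (- Z.of_nat (S k))) with (- Z.of_nat k) by lia.
    rewrite !zit_negnat. simpl. rewrite fg. reflexivity.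
Qed.

Lemma zit_pred {X} (f g : X -> X) (gf : forall x, g (f x) = x) n x :
  zit f g (Z.pred n) x = g (zit f g n x).
Proof.
  destruct (Z_nat_cases n) as [[k ->]|[k ->]].
  - destruct k.
    + reflexivity.
    + replace (Z.pred (Z.of_nat (S k))) with (Z.of_nat k) by lia.
      rewrite !zit_nat. simpl. rewrite gf. reflexivity.
  - replace (Z.pred (- Z.of_nat (S k))) with (- Z.of_nat (S (S k))) by lia.
    rewrite !zit_negnat. reflexivity.
Qed.

Lemma zit_add {X} (f g : X -> X) (fg : forall x, f (g x) = x) (gf : forall x, g (f x) = x) m n x :
  zit f g (m + n) x = zit f g m (zit f g n x).
Proof.
  induction m using Z.peano_ind.
  - reflexivity.
  - replace (Z.succ m + n) with (Z.succ (m + n)) by lia.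
    rewrite !zit_succ by assumption. rewrite IHm. reflexivity.
  - replace (Z.pred m + n) with (Z.pred (m + n)) by lia.
    rewrite !zit_pred by assumption. rewrite IHm. reflexivity.
Qed.

Lemma zit_comm {X Y} (f g : X -> X) (f' g' : Y -> Y) (h : X -> Y)
  (fg : forall x, f (g x) = x) (gf : forall x, g (f x) = x)
  (fg' : forall x, f' (g' x) = x) (gf' : forall x, g' (f' x) = x)
  (hf : forall x, h (f x) = f' (h x)) (hg : forall x, h (g x) = g' (h x)) n x :
  h (zit f g n x) = zit f' g' n (h x).
Proof.
  induction n using Z.peano_ind.
  - reflexivity.
  - rewrite !zit_succ by assumption. rewrite hf, IHn. reflexivity.
  - rewrite !zit_pred by assumption. rewrite hg, IHn. reflexivity.
Qed.

Lemma zit_inv {X} (f g : X -> X) (fg : forall x, f (g x) = x) (gf : forall x, g (f x) = x) n x :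
  zit f g n (zit f g (- n) x) = x.
Proof. rewrite <- zit_add by assumption. replace (n + - n) with 0 by lia. reflexivity. Qed.

Lemma zit_inv' {X} (f g : X -> X) (fg : forall x, f (g x) = x) (gf : forall x, g (f x) = x) n x :
  zit f g (- n) (zit f g n x) = x.
Proof. rewrite <- zit_add by assumption. replace (- n + n) with 0 by lia. reflexivity. Qed.

Definition pw {S} (a : S) (n : Z) : series S :=
  zit (fun p => mul p (xg a)) (fun p => mul p (yg a)) n one.

Lemma rx_ry {S} (a : S) p : mul (mul p (xg a)) (yg a) = p.
Proof. rewrite mul_assoc, xg_yg, mul_one_r. reflexivity. Qed.
Lemma ry_rx {S} (a : S) p : mul (mul p (yg a)) (xg a) = p.
Proof. rewrite mul_assoc, yg_xg, mul_one_r. reflexivity. Qed.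

Lemma pw_add {S} (a : S) m n : pw a (m + n) = mul (pw a m) (pw a n).
Proof.
  unfold pw. rewrite Z.add_comm, zit_add by (intros; apply rx_ry || apply ry_rx).
  set (P := zit _ _ m one).
  rewrite <- (mul_one_r P) at 1. symmetry.
  apply (zit_comm _ _ _ _ (fun q => mul P q)); intros; try apply rx_ry; try apply ry_rx;
    symmetry; apply mul_assoc.
Qed.

Lemma pw_0 {S} (a : S) : pw a 0 = one.
Proof. reflexivity. Qed.
Lemma pw_1 {S} (a : S) : pw a 1 = xg a.
Proof. unfold pw. simpl. apply mul_one_l. Qed.
Lemma pw_m1 {S} (a : S) : pw a (-1) = yg a.
Proof. unfold pw. simpl. apply mul_one_l. Qed.
Lemma pw_inv {S} (a : S) n : mul (pw a n) (pw a (- n)) = one.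
Proof. rewrite <- pw_add. replace (n + - n) with 0 by lia. reflexivity. Qed.
Lemma pw_inv' {S} (a : S) n : mul (pw a (- n)) (pw a n) = one.
Proof. rewrite <- pw_add. replace (- n + n) with 0 by lia. reflexivity. Qed.
Lemma pw_xg_comm {S} (a : S) n : mul (pw a n) (xg a) = mul (xg a) (pw a n).
Proof. rewrite <- pw_1, <- !pw_add. f_equal. lia. Qed.

Lemma pw_succ {S} (a : S) n : pw a (Z.succ n) = mul (pw a n) (xg a).
Proof. rewrite <- Z.add_1_r, pw_add, pw_1. reflexivity. Qed.
Lemma pw_pred {S} (a : S) n : pw a (Z.pred n) = mul (pw a n) (yg a).
Proof. rewrite <- Z.sub_1_r, <- Z.add_opp_r, pw_add, pw_m1. reflexivity. Qed.

Lemma pw_nil {S} (a : S) n : pw a n [] = 1.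
Proof.
  induction n using Z.peano_ind; [reflexivity| |].
  - rewrite pw_succ, mul_nil, IHn. reflexivity.
  - rewrite pw_pred, mul_nil, IHn. reflexivity.
Qed.

Lemma pw_single {S} (a : S) n c : pw a n [c] = if eqd c a then n else 0.
Proof.
  induction n using Z.peano_ind.
  - cbn -[Z.mul Z.add Z.opp Z.sub]. destruct (eqd c a); reflexivity.
  - rewrite pw_succ, mul_single, IHn, pw_nil. cbn -[Z.mul Z.add Z.opp Z.sub].
    destruct (eqd c a); lia.
  - rewrite pw_pred, mul_single, IHn, pw_nil. cbn -[Z.mul Z.add Z.opp Z.sub].
    destruct (eqd c a); lia.
Qed.

Definition onlya {S} (a : S) (t : list S) := forall y, In y t -> y = a.

Lemma yg_support {S} (a : S) t : yg a t <> 0 -> onlya a t.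
Proof.
  induction t as [|x t IH]; intros H y Hy; [destruct Hy|].
  simpl in H. destruct (eqd x a) as [E|E]; [|congruence].
  destruct Hy as [<-|Hy]; auto. apply IH; auto. lia.
Qed.

Lemma xg_support {S} (a : S) t : xg a t <> 0 -> onlya a t.
Proof.
  destruct t as [|x [|y t]]; intros H z Hz; simpl in *; try tauto.
  destruct (eqd x a); [|congruence]. destruct Hz as [<-|[]]; auto.
Qed.

Lemma onlya_app {S} (a : S) u v : onlya a u -> onlya a v -> onlya a (u ++ v).
Proof. intros Hu Hv y Hy. apply in_app_or in Hy. destruct Hy; auto. Qed.

Lemma pw_support {S} (a : S) n t : pw a n t <> 0 -> onlya a t.
Proof.
  revert t; induction n using Z.peano_ind; intros t H.
  - destruct t; [intros y []|]. simpl in H. congruence.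
  - rewrite pw_succ in H. apply mul_nz_split in H as [u [v [-> [Hu Hv]]]].
    apply onlya_app; auto. apply xg_support; auto.
  - rewrite pw_pred in H. apply mul_nz_split in H as [u [v [-> [Hu Hv]]]].
    apply onlya_app; auto. apply yg_support; auto.
Qed.

Definition word (S : Type) := list (S * Z).

Fixpoint M {S} (w : word S) : series S :=
  match w with [] => one | (b, n) :: w' => mul (pw b n) (M w') end.

Definition winv {S} (w : word S) : word S := rev (map (fun bn => (fst bn, - snd bn)) w).

Lemma M_app {S} (u v : word S) : M (u ++ v) = mul (M u) (M v).
Proof.
  induction u as [|[b n] u IH]; simpl.
  - rewrite mul_one_l. reflexivity.
  - rewrite IH, mul_assoc. reflexivity.
Qed.

Lemma winv_cons {S} (b : S) n w : winv ((b, n) :: w) = winv w ++ [(b, - n)].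
Proof. reflexivity. Qed.

Lemma winv_app {S} (u v : word S) : winv (u ++ v) = winv v ++ winv u.
Proof. unfold winv. rewrite map_app, rev_app_distr. reflexivity. Qed.

Lemma M_single {S} (b : S) n : M [(b, n)] = pw b n.
Proof. simpl. apply mul_one_r. Qed.

Lemma M_winv_r {S} (w : word S) : mul (M w) (M (winv w)) = one.
Proof.
  induction w as [|[b n] w IH]; simpl.
  - apply mul_one_l.
  - rewrite winv_cons, M_app, M_single.
    rewrite mul_assoc, <- (mul_assoc (M w)), IH, mul_one_l. apply pw_inv.
Qed.

Lemma M_winv_l {S} (w : word S) : mul (M (winv w)) (M w) = one.
Proof.
  induction w as [|[b n] w IH]; simpl.
  - apply mul_one_l.
  - rewrite winv_cons, M_app, M_single.
    rewrite mul_assoc, <- (mul_assoc (pw b (- n))), pw_inv', mul_one_l. apply IH.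
Qed.

Lemma M_nil {S} (w : word S) : M w [] = 1.
Proof. induction w as [|[b n] w IH]; cbn [M]; [reflexivity|]. rewrite mul_nil, IH, pw_nil. reflexivity. Qed.

Fixpoint ab {S} (w : word S) (c : S) : Z :=
  match w with [] => 0 | (b, n) :: w' => (if eqd c b then n else 0) + ab w' c end.

Lemma M_single_coef {S} (w : word S) c : M w [c] = ab w c.
Proof.
  induction w as [|[b n] w IH]; cbn [M ab]; [reflexivity|].
  rewrite mul_single, IH, pw_nil, pw_single, M_nil. ring.
Qed.

Lemma ab_app {S} (u v : word S) c : ab (u ++ v) c = ab u c + ab v c.
Proof. induction u as [|[b n] u IH]; simpl; [reflexivity|]. rewrite IH. ring. Qed.

Lemma ab_winv {S} (w : word S) c : ab (winv w) c = - ab w c.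
Proof.
  induction w as [|[b n] w IH]; [reflexivity|].
  rewrite winv_cons, ab_app, IH. simpl. destruct (eqd c b); ring.
Qed.

Fixpoint blocks {S} (t : list S) : nat :=
  match t with
  | [] => 0
  | x :: t' => match t' with [] => 1 | y :: _ => (if eqd x y then 0 else 1) + blocks t' end
  end.

Lemma blocks_cc {S} (x y : S) t : blocks (x :: y :: t) = ((if eqd x y then 0 else 1) + blocks (y :: t))%nat.
Proof. reflexivity. Qed.

Lemma blocks_cons_le {S} (x : S) t : (blocks (x :: t) <= Datatypes.S (blocks t))%nat.
Proof. destruct t as [|y t]; simpl; [lia|]. destruct (eqd x y); lia. Qed.

Lemma blocks_pow {S} (b : S) t1 t2 : onlya b t1 -> (blocks (t1 ++ t2) <= Datatypes.S (blocks t2))%nat.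
Proof.
  induction t1 as [|x t1 IH]; intros H; simpl; [lia|].
  destruct t1 as [|y t1].
  - simpl. apply blocks_cons_le.
  - assert (x = b) by (apply H; simpl; auto). assert (y = b) by (apply H; simpl; auto). subst.
    simpl. destruct (eqd b b) as [_|E]; [|congruence]. simpl.
    apply IH. intros z Hz. apply H. simpl. auto.
Qed.

Lemma M_support_blocks {S} (w : word S) t : M w t <> 0 -> (blocks t <= length w)%nat.
Proof.
  revert t; induction w as [|[b n] w IH]; intros t H; cbn [M] in H.
  - destruct t; simpl in *; [lia|congruence].
  - apply mul_nz_split in H as [u [v [-> [Hu Hv]]]].
    apply pw_support in Hu. specialize (IH v Hv). pose proof (blocks_pow b u v Hu). simpl. lia.
Qed.

Fixpoint reduced {S} (w : word S) : Prop :=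
  match w with
  | [] => True
  | (b, n) :: w' => n <> 0 /\ (match w' with [] => True | (b', _) :: _ => b <> b' end) /\ reduced w'
  end.

Lemma blocks_skel {S} (w : word S) : reduced w -> blocks (map fst w) = length w.
Proof.
  induction w as [|[b n] w IH]; intros H; [reflexivity|].
  destruct H as [_ [Hh Hr]]. destruct w as [|[b' n'] w]; [reflexivity|].
  change (blocks (b :: b' :: map fst w) = Datatypes.S (length ((b', n') :: w))).
  rewrite blocks_cc. destruct (eqd b b') as [E|E]; [congruence|].
  rewrite <- (IH Hr). reflexivity.
Qed.

Lemma coef_skel {S} (w : word S) : reduced w -> M w (map fst w) <> 0.
Proof.
  induction w as [|[b n] w IH]; intros H.
  - simpl. lia.
  - destruct H as [Hn [Hh Hr]].
    cbn [M map fst]. rewrite mul_cons, pw_nil.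
    assert (E1 : M w (b :: map fst w) = 0).
    { destruct (Z.eq_dec (M w (b :: map fst w)) 0) as [E|E]; auto.
      apply M_support_blocks in E.
      destruct w as [|[b' n'] w].
      - simpl in E. lia.
      - change (blocks (b :: b' :: map fst w) <= length ((b', n') :: w))%nat in E.
        rewrite blocks_cc in E. destruct (eqd b b'); [congruence|].
        change (b' :: map fst w) with (map fst ((b', n') :: w)) in E.
        rewrite blocks_skel in E by assumption. simpl in E. lia. }
    rewrite E1.
    destruct w as [|[b' n'] w].
    + cbn [map fst]. rewrite mul_nil. cbn [M]. unfold dl. rewrite pw_single. destruct (eqd b b); [|congruence].
      change (one (@nil S)) with 1. lia.
    + change (map fst ((b', n') :: w)) with (b' :: map fst w). rewrite mul_cons.
      rewrite (mul_zero_l' (dl b' (dl b (pw b n)))).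
      * unfold dl at 1. rewrite pw_single. destruct (eqd b b); [|congruence].
        intro Z0. apply IH; auto. change (map fst ((b', n') :: w)) with (b' :: map fst w). nia.
      * intros u. unfold dl. destruct (Z.eq_dec (pw b n (b :: b' :: u)) 0) as [E|E]; auto.
        apply pw_support in E. exfalso. apply Hh. symmetry. apply E. simpl. auto.
Qed.

Lemma mul_r_xg {S} (a : S) p t c :
  mul p (xg a) (t ++ [c]) = p (t ++ [c]) + (if eqd c a then p t else 0).
Proof.
  revert p; induction t as [|y t IH]; intros p.
  - rewrite app_nil_l, mul_single. change (xg a []) with 1. unfold xg.
    destruct (eqd c a); ring.
  - rewrite <- app_comm_cons, mul_cons, IH.
    replace (xg a (y :: t ++ [c])) with 0.
    + unfold dl. ring.
    + destruct t; reflexivity.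
Qed.

Lemma reduced_or {S} (w : word S) : reduced w \/
  (exists u1 b u2, w = u1 ++ (b, 0) :: u2) \/
  (exists u1 b m n u2, w = u1 ++ (b, m) :: (b, n) :: u2).
Proof.
  induction w as [|[b n] w IH]; [left; exact I|].
  destruct IH as [IH|[[u1 [b' [u2 E]]]|[u1 [b' [m [n' [u2 E]]]]]]].
  - destruct (Z.eq_dec n 0) as [->|Hn].
    + right; left. exists [], b, w. reflexivity.
    + destruct w as [|[b' n'] w].
      * left. simpl. auto.
      * destruct (eqd b b') as [<-|Hb].
        -- right; right. exists [], b, n, n', w. reflexivity.
        -- left. simpl. auto.
  - right; left. exists ((b, n) :: u1), b', u2. rewrite E. reflexivity.
  - right; right. exists ((b, n) :: u1), b', m, n', u2. rewrite E. reflexivity.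
Qed.

Lemma key_lemma {S} (a : S) (P : word S -> Prop)
  (P0 : P [])
  (Pa : forall w n, P w -> P (w ++ [(a, n)]))
  (Pz : forall u1 b u2, P (u1 ++ u2) -> P (u1 ++ (b, 0) :: u2))
  (Pm : forall u1 b m n u2, P (u1 ++ (b, m + n) :: u2) -> P (u1 ++ (b, m) :: (b, n) :: u2)) :
  forall w, mul (M w) (xg a) = mul (xg a) (M w) -> (exists k, M w = pw a k) /\ P w.
Proof.
  intros w. remember (length w) as L. revert w HeqL.
  induction L as [L IH] using (well_founded_induction lt_wf).
  intros w HL Hc.
  destruct (classic (exists w0 n, w = w0 ++ [(a, n)])) as [[w0 [n ->]]|Hl].
  { rewrite M_app, M_single in Hc.
    assert (Hc0 : mul (M w0) (xg a) = mul (xg a) (M w0)).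
    { assert (H1 : mul (mul (mul (M w0) (xg a)) (pw a n)) (pw a (- n)) =
                   mul (mul (mul (xg a) (M w0)) (pw a n)) (pw a (- n))).
      { rewrite (mul_assoc (M w0)), <- pw_xg_comm, <- mul_assoc, Hc, !mul_assoc. reflexivity. }
      rewrite !(mul_assoc _ (pw a n)), pw_inv, !mul_one_r in H1. exact H1. }
    destruct (IH (length w0)) with w0 as [[k Hk] HP]; auto.
    { rewrite HL, length_app. simpl. lia. }
    split; auto. exists (k + n). rewrite M_app, M_single, Hk, pw_add. reflexivity. }
  destruct (reduced_or w) as [Hr|[[u1 [b [u2 ->]]]|[u1 [b [m [n [u2 ->]]]]]]].
  - destruct w as [|bn w'] eqn:Ew0.
    { split; [exists 0; reflexivity|exact P0]. }
    rewrite <- Ew0 in *. exfalso.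
    destruct (exists_last (l := w)) as [w0 [[c n] Ew]]; [rewrite Ew0; discriminate|].
    assert (Hca : c <> a) by (intros ->; apply Hl; exists w0, n; exact Ew).
    pose proof (coef_skel w Hr) as Hnz.
    assert (Hs : map fst w = map fst w0 ++ [c]) by (rewrite Ew, map_app; reflexivity).
    pose proof (f_equal (fun f => f (a :: map fst w)) Hc) as H. cbn beta in H.
    rewrite mul_xg_cons in H. destruct (eqd a a) as [_|];[|congruence].
    rewrite Hs, app_comm_cons, mul_r_xg in H. destruct (eqd c a); [congruence|].
    rewrite <- app_comm_cons, <- Hs in H. apply Hnz. lia.
  - assert (EM : M (u1 ++ (b, 0) :: u2) = M (u1 ++ u2)).
    { rewrite !M_app. cbn [M]. rewrite pw_0, mul_one_l. reflexivity. }
    rewrite EM in Hc |- *.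
    destruct (IH (length (u1 ++ u2))) with (u1 ++ u2) as [Hk HP]; auto.
    rewrite HL, !length_app. simpl. lia.
  - assert (EM : M (u1 ++ (b, m) :: (b, n) :: u2) = M (u1 ++ (b, m + n) :: u2)).
    { rewrite !M_app. cbn [M]. rewrite pw_add, mul_assoc. reflexivity. }
    rewrite EM in Hc |- *.
    destruct (IH (length (u1 ++ (b, m + n) :: u2))) with (u1 ++ (b, m + n) :: u2) as [Hk HP]; auto.
    rewrite HL, !length_app. simpl. lia.
Qed.

Definition pos {S} (R : list S -> list S -> Prop) (d : series S) : Prop :=
  exists t, d t > 0 /\ (forall s, (length s < length t)%nat -> d s = 0) /\
    (forall s, length s = length t -> d s <> 0 -> R t s).

Lemma pos_zero {S} R (d : series S) : (forall t, d t = 0) -> ~ pos R d.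
Proof. intros H [t [Ht _]]. rewrite H in Ht. lia. Qed.

Lemma pos_add {S} (R : list S -> list S -> Prop)
  (Rtot : forall x y, R x y \/ R y x) (Ranti : forall x y, R x y -> R y x -> x = y)
  (Rtr : forall x y z, R x y -> R y z -> R x z) d1 d2 :
  pos R d1 -> pos R d2 -> pos R (sadd d1 d2).
Proof.
  intros [t1 [P1 [L1 M1]]] [t2 [P2 [L2 M2]]]. unfold sadd.
  destruct (Nat.lt_trichotomy (length t1) (length t2)) as [H|[H|H]].
  - exists t1. rewrite (L2 t1 H). split; [lia|]. split.
    + intros s Hs. rewrite L1, L2 by lia. ring.
    + intros s Hs Hnz. apply M1; auto. rewrite (L2 s) in Hnz by lia. lia.
  - destruct (Rtot t1 t2) as [R12|R21].
    + exists t1. split; [|split].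
      * destruct (Z.eq_dec (d2 t1) 0) as [E|E]; [lia|].
        assert (t2 = t1) by (apply Ranti; auto). subst. lia.
      * intros s Hs. rewrite L1, L2 by lia. ring.
      * intros s Hs Hnz. destruct (Z.eq_dec (d1 s) 0) as [E|E].
        -- apply (Rtr _ t2); auto. apply M2; [lia|lia].
        -- apply M1; auto.
    + exists t2. split; [|split].
      * destruct (Z.eq_dec (d1 t2) 0) as [E|E]; [lia|].
        assert (t2 = t1) by (apply Ranti; auto). subst. lia.
      * intros s Hs. rewrite L1, L2 by lia. ring.
      * intros s Hs Hnz. destruct (Z.eq_dec (d2 s) 0) as [E|E].
        -- apply (Rtr _ t1); auto. apply M1; [lia|lia].
        -- apply M2; auto.
  - exists t2. rewrite (L1 t2 H). split; [lia|]. split.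
    + intros s Hs. rewrite L1, L2 by lia. ring.
    + intros s Hs Hnz. apply M2; auto. rewrite (L1 s) in Hnz by lia. lia.
Qed.

Lemma min_nat (P : nat -> Prop) : (exists n, P n) -> exists n, P n /\ forall m, (m < n)%nat -> ~ P m.
Proof.
  intros [n Hn]. revert Hn. induction n as [n IH] using (well_founded_induction lt_wf). intros Hn.
  destruct (classic (exists m, (m < n)%nat /\ P m)) as [[m [Hm Pm]]|H].
  - apply (IH m Hm Pm).
  - exists n. split; auto. intros m Hm Pm. apply H. eauto.
Qed.

Lemma pos_total {S} (R : list S -> list S -> Prop)
  (Rmin : forall P : list S -> Prop, (exists x, P x) -> exists m, P m /\ forall x, P x -> R m x)
  (d : series S) : (exists t, d t <> 0) -> pos R d \/ pos R (fun t => - d t).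
Proof.
  intros [t Ht].
  destruct (min_nat (fun n => exists t, length t = n /\ d t <> 0)) as [n [[t0 [Hl0 Hn0]] Hmin]]; eauto.
  destruct (Rmin (fun t => length t = n /\ d t <> 0)) as [m [[Hlm Hnm] Hm]]; eauto.
  assert (Low : forall s, (length s < length m)%nat -> d s = 0).
  { intros s Hs. destruct (Z.eq_dec (d s) 0); auto. exfalso. apply (Hmin (length s)); [lia|eauto]. }
  destruct (Z_lt_le_dec 0 (d m)).
  - left. exists m. split; [lia|]. split; auto. intros s Hs Hnz. apply Hm. split; auto. lia.
  - right. exists m. split; [lia|]. split.
    + intros s Hs. rewrite Low; auto.
    + intros s Hs Hnz. apply Hm. split; [lia|]. lia.
Qed.

Lemma pos_mul_r {S} R (d r : series S) : r [] = 1 -> pos R d -> pos R (mul d r).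
Proof.
  intros Hr [t [P [L Mi]]].
  assert (E : forall s, (length s <= length t)%nat -> mul d r s = d s).
  { intros s Hs. rewrite low_l, Hr; [ring|]. intros s' Hs'. apply L. lia. }
  exists t. rewrite E by lia. split; [lia|]. split.
  - intros s Hs. rewrite E by lia. auto.
  - intros s Hs Hnz. rewrite E in Hnz by lia. auto.
Qed.

Lemma pos_mul_l {S} R (d r : series S) : r [] = 1 -> pos R d -> pos R (mul r d).
Proof.
  intros Hr [t [P [L Mi]]].
  assert (E : forall s, (length s <= length t)%nat -> mul r d s = d s).
  { intros s Hs. rewrite low_r, Hr; [ring|]. intros s' Hs'. apply L. lia. }
  exists t. rewrite E by lia. split; [lia|]. split.
  - intros s Hs. rewrite E by lia. auto.
  - intros s Hs Hnz. rewrite E in Hnz by lia. auto.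
Qed.

Definition isU {S} (p : series S) : Prop := p [] = 1 /\ exists q, mul p q = one /\ mul q p = one.
Definition U (S : Type) := {p : series S | isU p}.

Definition uinv {S} (p : U S) : series S :=
  proj1_sig (constructive_indefinite_description _ (proj2 (proj2_sig p))).

Lemma uinv_spec {S} (p : U S) : mul (proj1_sig p) (uinv p) = one /\ mul (uinv p) (proj1_sig p) = one.
Proof. unfold uinv. destruct (constructive_indefinite_description _ _) as [q Hq]. exact Hq. Qed.
Lemma uinv_r {S} (p : U S) : mul (proj1_sig p) (uinv p) = one.
Proof. apply uinv_spec. Qed.
Lemma uinv_l {S} (p : U S) : mul (uinv p) (proj1_sig p) = one.
Proof. apply uinv_spec. Qed.
Lemma U_nil {S} (p : U S) : proj1_sig p [] = 1.
Proof. apply (proj2_sig p). Qed.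
Lemma uinv_nil {S} (p : U S) : uinv p [] = 1.
Proof. pose proof (f_equal (fun f => f []) (uinv_r p)) as H. cbn beta in H. rewrite mul_nil, U_nil in H.
  change (one []) with 1 in H. lia. Qed.

Lemma inv_unique {S} (p q q' : series S) : mul p q = one -> mul q' p = one -> q = q'.
Proof. intros H1 H2. rewrite <- (mul_one_r q'), <- H1, <- mul_assoc, H2, mul_one_l. reflexivity. Qed.

Lemma uinv_unique {S} (p : U S) q : mul (proj1_sig p) q = one -> uinv p = q.
Proof. intros H. symmetry. apply (inv_unique (proj1_sig p)); auto. apply uinv_l. Qed.

Lemma isU_mul {S} (p q : series S) : isU p -> isU q -> isU (mul p q).
Proof.
  intros [Hp [p' [Hp1 Hp2]]] [Hq [q' [Hq1 Hq2]]]. split.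
  - rewrite mul_nil, Hp, Hq. reflexivity.
  - exists (mul q' p'). split.
    + rewrite mul_assoc, <- (mul_assoc q), Hq1, mul_one_l. exact Hp1.
    + rewrite mul_assoc, <- (mul_assoc p'), Hp2, mul_one_l. exact Hq2.
Qed.

Lemma isU_uinv {S} (p : U S) : isU (uinv p).
Proof. split; [apply uinv_nil|]. exists (proj1_sig p). split; [apply uinv_l|apply uinv_r]. Qed.
Lemma isU_val {S} (p : U S) : isU (proj1_sig p).
Proof. apply (proj2_sig p). Qed.

Definition Uop {S} (x y : U S) : U S :=
  exist _ (mul (mul (uinv y) (proj1_sig x)) (proj1_sig y))
    (isU_mul _ _ (isU_mul _ _ (isU_uinv y) (isU_val x)) (isU_val y)).

Lemma U_eq {S} (x y : U S) : proj1_sig x = proj1_sig y -> x = y.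
Proof. destruct x, y; simpl; intros ->. f_equal. apply proof_irrelevance. Qed.

Lemma isU_one {S} : isU (@one S).
Proof. split; [reflexivity|]. exists one. split; apply mul_one_l. Qed.

Lemma cancel_a {S} (p : U S) r : mul (proj1_sig p) (mul (uinv p) r) = r.
Proof. rewrite <- mul_assoc, uinv_r, mul_one_l. reflexivity. Qed.
Lemma cancel_b {S} (p : U S) r : mul (uinv p) (mul (proj1_sig p) r) = r.
Proof. rewrite <- mul_assoc, uinv_l, mul_one_l. reflexivity. Qed.

Lemma Uop_idem {S} (x : U S) : Uop x x = x.
Proof. apply U_eq. simpl. rewrite uinv_l, mul_one_l. reflexivity. Qed.

Lemma Uop_rdiv {S} (x y : U S) : exists! z, x = Uop z y.
Proof.
  set (z := exist isU (mul (mul (proj1_sig y) (proj1_sig x)) (uinv y))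
              (isU_mul _ _ (isU_mul _ _ (isU_val y) (isU_val x)) (isU_uinv y))).
  exists z. split.
  - apply U_eq. simpl. rewrite !mul_assoc, cancel_b, uinv_l, mul_one_r. reflexivity.
  - intros z' Hz'. apply U_eq. unfold z. subst x. simpl.
    rewrite !mul_assoc, cancel_a, uinv_r, mul_one_r. reflexivity.
Qed.

Lemma uinv_Uop {S} (y z : U S) : uinv (Uop y z) = mul (mul (uinv z) (uinv y)) (proj1_sig z).
Proof.
  apply uinv_unique. simpl. rewrite !mul_assoc, cancel_a, cancel_a. apply uinv_l.
Qed.

Lemma Uop_val {S} (x y : U S) : proj1_sig (Uop x y) = mul (mul (uinv y) (proj1_sig x)) (proj1_sig y).
Proof. reflexivity. Qed.

Lemma Uop_dist {S} (x y z : U S) : Uop (Uop x y) z = Uop (Uop x z) (Uop y z).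
Proof.
  apply U_eq. rewrite !Uop_val, uinv_Uop.
  rewrite !mul_assoc, !cancel_a. reflexivity.
Qed.

Definition Tq (S : Type) : quandle :=
  Quandle (U S) Uop (inhabits (exist _ one isU_one)) Uop_idem Uop_rdiv Uop_dist.

Lemma ex_of_unique {A} {P : A -> Prop} : (exists! z, P z) -> exists z, P z.
Proof. intros [z [Hz _]]. eauto. Qed.

Definition Rq {Q : quandle} (y x : Q) : Q := qop Q x y.
Definition Rinv {Q : quandle} (y x : Q) : Q :=
  proj1_sig (constructive_indefinite_description (fun z => x = qop Q z y) (ex_of_unique (q_rdiv Q x y))).

Lemma Rq_Rinv {Q : quandle} (y x : Q) : Rq y (Rinv y x) = x.
Proof. unfold Rq, Rinv. destruct (constructive_indefinite_description _ _) as [z Hz]. simpl. auto. Qed.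

Lemma Rinv_Rq {Q : quandle} (y x : Q) : Rinv y (Rq y x) = x.
Proof.
  destruct (q_rdiv Q (Rq y x) y) as [z [_ Hu]].
  transitivity z; [symmetry; apply Hu; symmetry; apply Rq_Rinv| apply Hu; reflexivity].
Qed.

Lemma Rq_inj {Q : quandle} (y a b : Q) : Rq y a = Rq y b -> a = b.
Proof. intros H. rewrite <- (Rinv_Rq y a), H. apply Rinv_Rq. Qed.

Definition is_auto {Q : quandle} (f g : Q -> Q) : Prop :=
  (forall x, f (g x) = x) /\ (forall x, g (f x) = x) /\ (forall a b, f (qop Q a b) = qop Q (f a) (f b)).

Lemma Rq_auto {Q : quandle} (y : Q) : is_auto (Rq y) (Rinv y).
Proof.
  split; [apply Rq_Rinv|]. split; [apply Rinv_Rq|].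
  intros a b. unfold Rq. apply q_rdist.
Qed.

Lemma auto_inv {Q : quandle} (f g : Q -> Q) : is_auto f g -> is_auto g f.
Proof.
  intros [fg [gf hom]]. split; auto. split; auto.
  intros a b. rewrite <- (gf (qop Q (g a) (g b))), hom, !fg. reflexivity.
Qed.

Lemma auto_comp {Q : quandle} (f g f' g' : Q -> Q) : is_auto f g -> is_auto f' g' ->
  is_auto (fun x => f (f' x)) (fun x => g' (g x)).
Proof.
  intros [fg [gf hom]] [fg' [gf' hom']]. split; [intros; rewrite fg', fg; auto|].
  split; [intros; rewrite gf, gf'; auto|]. intros a b. rewrite hom', hom. reflexivity.
Qed.

Definition Rpow {Q : quandle} (y : Q) (n : Z) : Q -> Q := zit (Rq y) (Rinv y) n.

Lemma Rpow_auto {Q : quandle} (y : Q) n : is_auto (Rpow y n) (Rpow y (- n)).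
Proof.
  pose proof (Rq_auto y) as [fg [gf hom]].
  split; [intros; apply zit_inv; auto|]. split; [intros; apply zit_inv'; auto|].
  induction n using Z.peano_ind; intros a b.
  - reflexivity.
  - unfold Rpow in *. rewrite !zit_succ by auto. rewrite IHn. apply hom.
  - unfold Rpow in *. rewrite !zit_pred by auto. rewrite IHn.
    apply (auto_inv _ _ (Rq_auto y)).
Qed.

Lemma Rpow_self {Q : quandle} (y : Q) n : Rpow y n y = y.
Proof.
  pose proof (Rq_auto y) as [fg [gf hom]].
  induction n using Z.peano_ind; unfold Rpow in *.
  - reflexivity.
  - rewrite zit_succ, IHn by auto. unfold Rq. apply q_idem.
  - rewrite zit_pred, IHn by auto. rewrite <- (q_idem Q y) at 2. apply Rinv_Rq.
Qed.

Lemma auto_R {Q : quandle} (f g : Q -> Q) : is_auto f g ->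
  forall y z, Rq (f y) z = f (Rq y (g z)).
Proof. intros [fg [gf hom]] y z. unfold Rq. rewrite hom, fg. reflexivity. Qed.

Lemma auto_Rinv {Q : quandle} (f g : Q -> Q) : is_auto f g ->
  forall y z, Rinv (f y) z = f (Rinv y (g z)).
Proof.
  intros [fg [gf hom]] y z. apply (Rq_inj (f y)). rewrite Rq_Rinv. unfold Rq at 1.
  rewrite <- hom. change (qop Q (Rinv y (g z)) y) with (Rq y (Rinv y (g z))). rewrite Rq_Rinv, fg.
  reflexivity.
Qed.

Fixpoint act {S} {Q : quandle} (i : S -> Q) (x : Q) (w : word S) : Q :=
  match w with [] => x | (b, n) :: w' => act i (Rpow (i b) n x) w' end.

Lemma act_app {S} {Q : quandle} (i : S -> Q) x u v : act i x (u ++ v) = act i (act i x u) v.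
Proof. revert x; induction u as [|[b n] u IH]; intros x; simpl; auto. Qed.

Lemma act_single {S} {Q : quandle} (i : S -> Q) x b n : act i x [(b, n)] = Rpow (i b) n x.
Proof. reflexivity. Qed.

Lemma act_winv_r {S} {Q : quandle} (i : S -> Q) x w : act i (act i x w) (winv w) = x.
Proof.
  revert x; induction w as [|[b n] w IH]; intros x; [reflexivity|].
  rewrite winv_cons, act_app. simpl act at 2. rewrite IH. simpl.
  apply (Rpow_auto (i b) n).
Qed.

Lemma act_winv_l {S} {Q : quandle} (i : S -> Q) x w : act i (act i x (winv w)) w = x.
Proof.
  revert x; induction w as [|[b n] w IH]; intros x; [reflexivity|].
  rewrite winv_cons, act_app. simpl. pose proof (Rpow_auto (i b) n) as [fg _]. rewrite fg. apply IH.
Qed.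

Lemma act_R {S} {Q : quandle} (i : S -> Q) w : forall y z,
  Rq (act i y w) z = act i (Rq y (act i z (winv w))) w.
Proof.
  induction w as [|[c n] w IH]; intros y z; [reflexivity|].
  simpl act. rewrite IH, (auto_R _ _ (Rpow_auto (i c) n)).
  rewrite winv_cons, act_app. reflexivity.
Qed.

Lemma act_Rinv {S} {Q : quandle} (i : S -> Q) w : forall y z,
  Rinv (act i y w) z = act i (Rinv y (act i z (winv w))) w.
Proof.
  induction w as [|[c n] w IH]; intros y z; [reflexivity|].
  simpl act. rewrite IH, (auto_Rinv _ _ (Rpow_auto (i c) n)).
  rewrite winv_cons, act_app. reflexivity.
Qed.

Definition gen {S} {Q : quandle} (i : S -> Q) (x : Q) : Prop := exists a v, x = act i (i a) v.

Lemma gen_op {S} {Q : quandle} (i : S -> Q) x z : gen i x -> gen i z -> gen i (qop Q x z).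
Proof.
  intros [a [v ->]] [b [w ->]]. exists a, (v ++ winv w ++ [(b, 1)] ++ w).
  change (qop Q (act i (i a) v) (act i (i b) w)) with (Rq (act i (i b) w) (act i (i a) v)).
  rewrite act_R, !act_app. reflexivity.
Qed.

Lemma gen_Rinv {S} {Q : quandle} (i : S -> Q) x z : gen i x -> gen i z -> gen i (Rinv z x).
Proof.
  intros [a [v ->]] [b [w ->]]. exists a, (v ++ winv w ++ [(b, -1)] ++ w).
  rewrite act_Rinv, !act_app. reflexivity.
Qed.

Lemma bool_rdiv (x y : bool) : exists! z : bool, x = (fun a _ => a) z y.
Proof. exists x. split; auto. Qed.
Definition boolQ : quandle :=
  Quandle bool (fun a _ => a) (inhabits true) (fun x => eq_refl) bool_rdiv (fun x y z => eq_refl).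

Lemma free_inhabited (S : Type) (Q : quandle) (i : S -> Q) : is_free_quandle S Q i -> inhabited S.
Proof.
  intros Hf. destruct (classic (inhabited S)) as [H|H]; auto. exfalso.
  destruct (q_nonempty Q) as [x0].
  destruct (Hf boolQ (fun _ => true)) as [g [_ [_ Hu]]].
  assert (E1 : (fun _ : Q => true) x0 = g x0).
  { apply (Hu (fun _ => true)); [intros a b; reflexivity|intros s; exfalso; apply H; constructor; exact s]. }
  assert (E2 : (fun _ : Q => false) x0 = g x0).
  { apply (Hu (fun _ => false)); [intros a b; reflexivity|intros s; exfalso; apply H; constructor; exact s]. }
  simpl in *. congruence.
Qed.

Definition subop {S} {Q : quandle} (i : S -> Q) (x y : {z : Q | gen i z}) : {z : Q | gen i z} :=
  exist _ (qop Q (proj1_sig x) (proj1_sig y)) (gen_op i _ _ (proj2_sig x) (proj2_sig y)).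

Lemma sub_eq {S} {Q : quandle} (i : S -> Q) (x y : {z : Q | gen i z}) : proj1_sig x = proj1_sig y -> x = y.
Proof. destruct x, y; simpl; intros ->. f_equal. apply proof_irrelevance. Qed.

Lemma sub_idem {S} {Q : quandle} (i : S -> Q) x : subop i x x = x.
Proof. apply sub_eq. simpl. apply q_idem. Qed.

Lemma sub_rdiv {S} {Q : quandle} (i : S -> Q) x y : exists! z, x = subop i z y.
Proof.
  exists (exist _ (Rinv (proj1_sig y) (proj1_sig x)) (gen_Rinv i _ _ (proj2_sig x) (proj2_sig y))).
  split.
  - apply sub_eq. simpl. symmetry. apply (Rq_Rinv (proj1_sig y)).
  - intros z Hz. apply sub_eq. rewrite Hz. simpl. apply (Rinv_Rq (proj1_sig y)).
Qed.

Lemma sub_dist {S} {Q : quandle} (i : S -> Q) x y z : subop i (subop i x y) z = subop i (subop i x z) (subop i y z).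
Proof. apply sub_eq. simpl. apply q_rdist. Qed.

Definition subQ {S} {Q : quandle} (i : S -> Q) (s0 : S) : quandle :=
  Quandle {z : Q | gen i z} (subop i)
    (inhabits (exist _ (i s0) (ex_intro _ s0 (ex_intro _ [] eq_refl))))
    (sub_idem i) (sub_rdiv i) (sub_dist i).

Lemma free_gen (S : Type) (Q : quandle) (i : S -> Q) : is_free_quandle S Q i -> forall x, gen i x.
Proof.
  intros Hf. destruct (free_inhabited S Q i Hf) as [s0].
  destruct (Hf (subQ i s0) (fun s => exist _ (i s) (ex_intro _ s (ex_intro _ [] eq_refl))))
    as [k [Hk [Hki _]]].
  destruct (Hf Q i) as [g [_ [_ Hu]]].
  assert (E1 : forall x, proj1_sig (k x) = g x).
  { apply (Hu (fun x => proj1_sig (k x))).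
    - intros a b. rewrite Hk. reflexivity.
    - intros s. rewrite Hki. reflexivity. }
  assert (E2 : forall x, x = g x).
  { apply (Hu (fun x => x)); [intros a b|intros s]; reflexivity. }
  intros x. assert (H : proj1_sig (k x) = x) by (rewrite E1; symmetry; apply E2).
  rewrite <- H. apply (proj2_sig (k x)).
Qed.

Lemma isU_xg {S} (a : S) : isU (xg a).
Proof. split; [reflexivity|]. exists (yg a). split; [apply xg_yg|apply yg_xg]. Qed.
Definition xgU {S} (a : S) : U S := exist _ (xg a) (isU_xg a).

Lemma G_hom {S} {Q : quandle} (g2 : Q -> Tq S) (Hh : quandle_hom Q (Tq S) g2) x y :
  mul (proj1_sig (g2 y)) (proj1_sig (g2 (qop Q x y))) = mul (proj1_sig (g2 x)) (proj1_sig (g2 y)).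
Proof.
  rewrite Hh. change (qop (Tq S) (g2 x) (g2 y)) with (Uop (g2 x) (g2 y)).
  rewrite Uop_val, !mul_assoc, cancel_a. reflexivity.
Qed.

Lemma G_pow {S} {Q : quandle} (i : S -> Q) (g2 : Q -> Tq S) (Hh : quandle_hom Q (Tq S) g2)
  (Hi : forall s, g2 (i s) = xgU s) b n x :
  mul (pw b n) (proj1_sig (g2 (Rpow (i b) n x))) = mul (proj1_sig (g2 x)) (pw b n).
Proof.
  pose proof (Rq_auto (i b)) as [fg [gf _]].
  assert (Hb : proj1_sig (g2 (i b)) = xg b) by (rewrite Hi; reflexivity).
  induction n using Z.peano_ind.
  - unfold Rpow. simpl. rewrite mul_one_l, mul_one_r. reflexivity.
  - unfold Rpow in *. rewrite zit_succ by auto. rewrite pw_succ.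
    set (z := zit (Rq (i b)) (Rinv (i b)) n x) in *.
    rewrite mul_assoc. unfold Rq at 1.
    pose proof (G_hom g2 Hh z (i b)) as H. rewrite Hb in H. rewrite H.
    rewrite <- mul_assoc, IHn, mul_assoc. reflexivity.
  - unfold Rpow in *. rewrite zit_pred by auto. rewrite pw_pred.
    set (z := zit (Rq (i b)) (Rinv (i b)) n x) in *.
    pose proof (G_hom g2 Hh (Rinv (i b) z) (i b)) as H. rewrite Hb in H.
    change (qop Q (Rinv (i b) z) (i b)) with (Rq (i b) (Rinv (i b) z)) in H. rewrite Rq_Rinv in H.
    assert (H2 : mul (yg b) (proj1_sig (g2 (Rinv (i b) z))) = mul (proj1_sig (g2 z)) (yg b)).
    { transitivity (mul (mul (yg b) (mul (proj1_sig (g2 (Rinv (i b) z))) (xg b))) (yg b)).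
      { rewrite !mul_assoc, xg_yg, mul_one_r. reflexivity. }
      rewrite <- H, <- (mul_assoc (yg b) (xg b)), yg_xg, mul_one_l. reflexivity. }
    rewrite mul_assoc, H2, <- mul_assoc, IHn, mul_assoc. reflexivity.
Qed.

Lemma G_act {S} {Q : quandle} (i : S -> Q) (g2 : Q -> Tq S) (Hh : quandle_hom Q (Tq S) g2)
  (Hi : forall s, g2 (i s) = xgU s) v : forall x,
  mul (M v) (proj1_sig (g2 (act i x v))) = mul (proj1_sig (g2 x)) (M v).
Proof.
  induction v as [|[b n] v IH]; intros x.
  - simpl. rewrite mul_one_l, mul_one_r. reflexivity.
  - cbn [M act]. rewrite mul_assoc, IH, <- mul_assoc, (G_pow i g2 Hh Hi), mul_assoc. reflexivity.
Qed.

Lemma G_gen {S} {Q : quandle} (i : S -> Q) (g2 : Q -> Tq S) (Hh : quandle_hom Q (Tq S) g2)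
  (Hi : forall s, g2 (i s) = xgU s) a v :
  proj1_sig (g2 (act i (i a) v)) = M (winv v ++ [(a, 1)] ++ v).
Proof.
  pose proof (G_act i g2 Hh Hi v (i a)) as H. rewrite Hi in H. simpl proj1_sig in H.
  rewrite !M_app, M_single, pw_1.
  transitivity (mul (mul (M (winv v)) (M v)) (proj1_sig (g2 (act i (i a) v)))).
  { rewrite M_winv_l, mul_one_l. reflexivity. }
  rewrite mul_assoc, H. reflexivity.
Qed.

Lemma act_key {S} {Q : quandle} (i : S -> Q) a u :
  mul (M u) (xg a) = mul (xg a) (M u) -> (exists k, M u = pw a k) /\ act i (i a) u = i a.
Proof.
  apply (key_lemma a (fun w => act i (i a) w = i a)).
  - reflexivity.
  - intros w n H. rewrite act_app, H. simpl. apply Rpow_self.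
  - intros u1 b u2 H. rewrite act_app in *. exact H.
  - intros u1 b m n u2 H. rewrite act_app in *. simpl in *.
    pose proof (Rq_auto (i b)) as [fg [gf _]].
    assert (E : Rpow (i b) n (Rpow (i b) m (act i (i a) u1)) = Rpow (i b) (m + n) (act i (i a) u1)).
    { unfold Rpow. rewrite Z.add_comm, zit_add by auto. reflexivity. }
    rewrite E. exact H.
Qed.

Lemma coef_eq {S} (p q : series S) c : p = q -> p [c] = q [c].
Proof. intros ->. reflexivity. Qed.

Lemma ab_gen {S} (v : word S) a c : ab (winv v ++ [(a, 1)] ++ v) c = if eqd c a then 1 else 0.
Proof. rewrite !ab_app, ab_winv. simpl. destruct (eqd c a); ring. Qed.

Lemma G_inj {S} {Q : quandle} (i : S -> Q) (g2 : Q -> Tq S) (Hh : quandle_hom Q (Tq S) g2)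
  (Hi : forall s, g2 (i s) = xgU s) (Hgen : forall x, gen i x) x y :
  proj1_sig (g2 x) = proj1_sig (g2 y) -> x = y.
Proof.
  destruct (Hgen x) as [a [v ->]]. destruct (Hgen y) as [b [w ->]].
  rewrite !(G_gen i g2 Hh Hi). intros E.
  assert (a = b).
  { pose proof (coef_eq _ _ a E) as Ea. rewrite !M_single_coef, !ab_gen in Ea.
    destruct (eqd a a); [|congruence]. destruct (eqd a b); auto. lia. }
  subst b.
  set (u := v ++ winv w).
  assert (Hc : mul (M u) (xg a) = mul (xg a) (M u)).
  { unfold u. rewrite M_app.
    assert (Ew : mul (M (winv w)) (xg a) = mul (M (winv v ++ [(a, 1)] ++ v)) (M (winv w))).
    { rewrite E, !M_app, M_single, pw_1, !mul_assoc, M_winv_r, mul_one_r. reflexivity. }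
    rewrite mul_assoc, Ew, !M_app, M_single, pw_1, !mul_assoc.
    rewrite <- (mul_assoc (M v) (M (winv v))), M_winv_r, mul_one_l. reflexivity. }
  destruct (act_key i a u Hc) as [_ Ha].
  transitivity (act i (act i (i a) u) w).
  - unfold u. rewrite act_app, act_winv_l. reflexivity.
  - rewrite Ha. reflexivity.
Qed.

Lemma semi_latin_lemma {S} {Q : quandle} (i : S -> Q) (g2 : Q -> Tq S) (Hh : quandle_hom Q (Tq S) g2)
  (Hi : forall s, g2 (i s) = xgU s) (Hgen : forall x, gen i x) x y1 y2 :
  qop Q x y1 = qop Q x y2 -> y1 = y2.
Proof.
  intros Hq. apply (G_inj i g2 Hh Hi Hgen).
  pose proof (G_hom g2 Hh x y1) as H1. pose proof (G_hom g2 Hh x y2) as H2.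
  rewrite <- Hq in H2. set (E := proj1_sig (g2 (qop Q x y1))) in *.
  destruct (Hgen x) as [a [v Hx]]. destruct (Hgen y1) as [b1 [w1 Hy1]]. destruct (Hgen y2) as [b2 [w2 Hy2]].
  rewrite Hx, Hy1, Hy2, !(G_gen i g2 Hh Hi) in *.
  set (z1 := winv w1 ++ [(b1, 1)] ++ w1) in *. set (z2 := winv w2 ++ [(b2, 1)] ++ w2) in *.
  set (p := winv v ++ [(a, 1)] ++ v) in *.
  set (C1 := M z1) in *. set (C2 := M z2) in *. set (Ci := M (winv z2)). set (P := M p) in *.
  assert (HD : mul (mul C1 Ci) P = mul P (mul C1 Ci)).
  { transitivity (mul (mul C1 E) Ci).
    - transitivity (mul (mul (mul C1 Ci) P) (mul C2 Ci)).
      { unfold C2, Ci. rewrite M_winv_r, mul_one_r. reflexivity. }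
      rewrite !mul_assoc, <- (mul_assoc P C2), <- H2, !mul_assoc.
      rewrite <- (mul_assoc Ci C2). unfold Ci, C2. rewrite M_winv_l, mul_one_l. reflexivity.
    - rewrite H1, !mul_assoc. reflexivity. }
  assert (HP1 : mul (M v) P = mul (xg a) (M v)).
  { unfold P, p. rewrite !M_app, M_single, pw_1, <- !mul_assoc, M_winv_r, mul_one_l. reflexivity. }
  assert (HP2 : mul (M (winv v)) (xg a) = mul P (M (winv v))).
  { unfold P, p. rewrite !M_app, M_single, pw_1, !mul_assoc, M_winv_r, mul_one_r. reflexivity. }
  set (u := v ++ z1 ++ winv z2 ++ winv v).
  assert (EMu : M u = mul (M v) (mul (mul C1 Ci) (M (winv v)))).
  { unfold u, C1, Ci. rewrite !M_app, !mul_assoc. reflexivity. }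
  assert (Hc : mul (M u) (xg a) = mul (xg a) (M u)).
  { rewrite EMu. set (D := mul C1 Ci) in *.
    transitivity (mul (M v) (mul D (mul (M (winv v)) (xg a)))). { rewrite !mul_assoc. reflexivity. }
    rewrite HP2.
    transitivity (mul (M v) (mul (mul D P) (M (winv v)))). { rewrite !mul_assoc. reflexivity. }
    rewrite HD.
    transitivity (mul (mul (M v) P) (mul D (M (winv v)))). { rewrite !mul_assoc. reflexivity. }
    rewrite HP1, !mul_assoc. reflexivity. }
  destruct (act_key i a u Hc) as [[k Hk] _].
  assert (Hab : forall c, ab v c + (if eqd c b1 then 1 else 0) - (if eqd c b2 then 1 else 0) - ab v c
                          = if eqd c a then k else 0).
  { intros c. pose proof (coef_eq _ _ c Hk) as Hc'. rewrite M_single_coef, pw_single in Hc'.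
    rewrite <- Hc'. unfold u, z1, z2. rewrite !ab_app, !ab_winv, !ab_app, ab_winv. cbn [ab]. ring. }
  assert (k = 0).
  { pose proof (Hab a) as Ha. pose proof (Hab b1) as Hb1. pose proof (Hab b2) as Hb2.
    destruct (eqd a a); [|congruence]. destruct (eqd b1 b1); [|congruence]. destruct (eqd b2 b2); [|congruence].
    destruct (eqd a b1); destruct (eqd a b2); destruct (eqd b1 b2); destruct (eqd b2 b1);
      destruct (eqd b1 a); destruct (eqd b2 a); subst; try congruence; lia. }
  subst k. rewrite pw_0 in Hk. rewrite Hk in EMu.
  assert (HD1 : mul C1 Ci = one).
  { assert (E1 : mul (mul (M (winv v)) one) (M v) = mul C1 Ci).
    { rewrite EMu. rewrite !mul_assoc. rewrite <- (mul_assoc (M (winv v)) (M v)), M_winv_l, mul_one_l.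
      rewrite mul_one_r. reflexivity. }
    rewrite <- E1, mul_one_r, M_winv_l. reflexivity. }
  transitivity (mul (mul C1 Ci) C2).
  - unfold Ci, C2. rewrite mul_assoc, M_winv_l, mul_one_r. reflexivity.
  - rewrite HD1, mul_one_l. reflexivity.
Qed.

Lemma G_op {S} {Q : quandle} (g2 : Q -> Tq S) (Hh : quandle_hom Q (Tq S) g2) x z :
  proj1_sig (g2 (qop Q x z)) = mul (mul (uinv (g2 z)) (proj1_sig (g2 x))) (proj1_sig (g2 z)).
Proof. rewrite Hh. reflexivity. Qed.

Theorem theorem3p5 (S : Type) (Q : quandle) (i : S -> Q) :
  is_free_quandle S Q i -> right_orderable Q /\ semi_latin Q.
Proof.
  intros Hf.
  pose proof (free_gen S Q i Hf) as Hgen.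
  destruct (Hf (Tq S) (fun s => xgU s)) as [g2 [Hh [Hi _]]].
  split.
  - destruct (WO.wo_exists (list S)) as [R [Rtot [Ranti [Rtr Rmin]]]].
    exists (fun x y => pos R (fun t => proj1_sig (g2 y) t - proj1_sig (g2 x) t)).
    split; [split; [|split]|].
    + intros x. apply pos_zero. intros; lia.
    + intros x y z H1 H2.
      replace (fun t => proj1_sig (g2 z) t - proj1_sig (g2 x) t)
        with (sadd (fun t => proj1_sig (g2 y) t - proj1_sig (g2 x) t)
                   (fun t => proj1_sig (g2 z) t - proj1_sig (g2 y) t))
        by (apply functional_extensionality; intros t; unfold sadd; ring).
      apply pos_add; auto.
    + intros x y. destruct (classic (x = y)) as [E|E]; [right; left; exact E|].
      assert (Hne : exists t, proj1_sig (g2 y) t - proj1_sig (g2 x) t <> 0).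
      { apply NNPP. intros H. apply E. apply (G_inj i g2 Hh Hi Hgen).
        apply functional_extensionality. intros t.
        destruct (Z.eq_dec (proj1_sig (g2 y) t - proj1_sig (g2 x) t) 0); [lia|].
        exfalso; eauto. }
      destruct (pos_total R Rmin _ Hne) as [P|P]; [left; exact P|].
      right; right.
      replace (fun t => proj1_sig (g2 x) t - proj1_sig (g2 y) t)
        with (fun t => - (proj1_sig (g2 y) t - proj1_sig (g2 x) t))
        by (apply functional_extensionality; intros t; ring).
      exact P.
    + intros x y z H.
      replace (fun t => proj1_sig (g2 (qop Q y z)) t - proj1_sig (g2 (qop Q x z)) t)
        with (mul (mul (uinv (g2 z)) (ssub (proj1_sig (g2 y)) (proj1_sig (g2 x)))) (proj1_sig (g2 z))).
      * apply pos_mul_r; [apply U_nil|]. apply pos_mul_l; [apply uinv_nil|]. exact H.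
      * rewrite !G_op by exact Hh. rewrite mul_sub_r, mul_sub_l. reflexivity.
  - intros x y1 y2. apply (semi_latin_lemma i g2 Hh Hi Hgen).
Qed.
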